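(* Let $\{F_x : x\in V(G)\}$ be a representation of a restricted frame graph $G$. Let $u,v,w\in V(G)$ be such that $F_u$ is inside $F_v$ and $F_w$ is outside $F_v$. Then every path $P$ in $G$ from $u$ to $w$ either contains $v$ or contains a vertex adjacent to $v$.
   Context: A frame is the boundary of an axis-parallel box $I\times J\subset\mathbb R^2$. A representation of a graph $G$ as a restricted frame graph is a family of frames $\{F_x : x\in V(G)\}$ with $xy\in E(G)$ iff $F_x\cap F_y\neq\emptyset$, satisfying: (1) corners of a frame do not coincide with any point of another frame; (2) the left side of any frame does not intersect any other frame; (3) if the right side of a frame intersects a second frame, this right side intersects both the top and the bottom side of the second frame; (4) if two frames have non-empty intersection, then no frame is entirely contained in the intersection of the two regions bounded by these two frames. $F_2$ is inside $F_1$ (and $F_1$ contains $F_2$) if $F_1\cap F_2=\emptyset$ and $F_2$ lies in the region bounded by $F_1$; $F_2$ is outside $F_1$ if $F_1\cap F_2=\emptyset$ and $F_2$ is not inside $F_1$. *)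

(* Defs.v *)
From Stdlib Require Import Reals List.
Open Scope R_scope.

Definition point := (R * R)%type.

(* A frame is the boundary of an axis-parallel box [x1,x2] x [y1,y2]
   with x1 < x2 and y1 < y2. *)
Record frame := mkFrame {
  fx1 : R; fx2 : R; fy1 : R; fy2 : R;
  fx_lt : fx1 < fx2; fy_lt : fy1 < fy2 }.

Definition region (F : frame) (p : point) : Prop :=
  fx1 F <= fst p <= fx2 F /\ fy1 F <= snd p <= fy2 F.

Definition left_side (F : frame) (p : point) : Prop :=
  fst p = fx1 F /\ fy1 F <= snd p <= fy2 F.
Definition right_side (F : frame) (p : point) : Prop :=
  fst p = fx2 F /\ fy1 F <= snd p <= fy2 F.
Definition bottom_side (F : frame) (p : point) : Prop :=
  snd p = fy1 F /\ fx1 F <= fst p <= fx2 F.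
Definition top_side (F : frame) (p : point) : Prop :=
  snd p = fy2 F /\ fx1 F <= fst p <= fx2 F.

Definition on_frame (F : frame) (p : point) : Prop :=
  left_side F p \/ right_side F p \/ bottom_side F p \/ top_side F p.

Definition is_corner (F : frame) (p : point) : Prop :=
  (fst p = fx1 F \/ fst p = fx2 F) /\ (snd p = fy1 F \/ snd p = fy2 F).

Definition meets (A B : point -> Prop) : Prop := exists p, A p /\ B p.

Definition frames_meet (F G : frame) : Prop := meets (on_frame F) (on_frame G).

Definition inside (F2 F1 : frame) : Prop :=
  ~ frames_meet F1 F2 /\ forall p, on_frame F2 p -> region F1 p.

Definition outside (F2 F1 : frame) : Prop :=
  ~ frames_meet F1 F2 /\ ~ inside F2 F1.

Definition restricted_frame_rep {V : Type} (E : V -> V -> Prop)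
    (F : V -> frame) : Prop :=
  (forall x y, x <> y -> (E x y <-> frames_meet (F x) (F y))) /\
  (forall x y p, x <> y -> is_corner (F x) p -> ~ on_frame (F y) p) /\
  (forall x y, x <> y -> ~ meets (left_side (F x)) (on_frame (F y))) /\
  (forall x y, x <> y -> meets (right_side (F x)) (on_frame (F y)) ->
     meets (right_side (F x)) (top_side (F y)) /\
     meets (right_side (F x)) (bottom_side (F y))) /\
  (forall x y, x <> y -> frames_meet (F x) (F y) ->
     forall z, ~ (forall p, on_frame (F z) p ->
                    region (F x) p /\ region (F y) p)).

Definition finite_simple_graph {V : Type} (E : V -> V -> Prop) : Prop :=
  (exists l : list V, forall x, In x l) /\
  (forall x, ~ E x x) /\ (forall x y, E x y -> E y x).

Fixpoint is_walk {V : Type} (E : V -> V -> Prop) (p : list V) : Prop :=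
  match p with
  | x :: ((y :: _) as q) => E x y /\ is_walk E q
  | _ => True
  end.

Definition is_path {V : Type} (E : V -> V -> Prop) (u w : V) (p : list V)
  : Prop :=
  is_walk E p /\ NoDup p /\ hd_error p = Some u /\ hd_error (rev p) = Some w.

(* Main.v *)
Require Import Defs.
From Stdlib Require Import Reals List Lra.
Open Scope R_scope.

Ltac pick := first [ left; repeat split; lra | right; pick | repeat split; lra ].

Ltac try_pt Hn x y :=
  apply Hn; exists (x, y); unfold on_frame, left_side, right_side,
  bottom_side, top_side; simpl; split; pick.

Ltac brute Hn A B qx qy :=
  first [ try_pt Hn (fx1 A) (fy1 B) | try_pt Hn (fx1 A) (fy2 B)
        | try_pt Hn (fx2 A) (fy1 B) | try_pt Hn (fx2 A) (fy2 B)
        | try_pt Hn (fx1 B) (fy1 A) | try_pt Hn (fx1 B) (fy2 A)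
        | try_pt Hn (fx2 B) (fy1 A) | try_pt Hn (fx2 B) (fy2 A)
        | try_pt Hn (fx1 A) qy | try_pt Hn (fx2 A) qy
        | try_pt Hn qx (fy1 A) | try_pt Hn qx (fy2 A) ].

Lemma geom (A B : frame) (q : point) :
  ~ frames_meet B A -> on_frame B q ->
  fx1 A < fst q < fx2 A -> fy1 A < snd q < fy2 A ->
  forall p, on_frame B p -> region A p.
Proof.
  intros Hn Hq H1 H2.
  destruct q as [qx qy]; simpl in H1, H2.
  pose proof (fx_lt A); pose proof (fy_lt A);
  pose proof (fx_lt B); pose proof (fy_lt B).
  assert (K : fx1 A < fx1 B /\ fx2 B < fx2 A /\ fy1 A < fy1 B /\ fy2 B < fy2 A).
  { unfold on_frame, left_side, right_side, bottom_side, top_side in Hq;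
    simpl in Hq.
    destruct (Rlt_le_dec (fx1 A) (fx1 B)); destruct (Rlt_le_dec (fx2 B) (fx2 A));
    destruct (Rlt_le_dec (fy1 A) (fy1 B)); destruct (Rlt_le_dec (fy2 B) (fy2 A));
    try (repeat split; assumption);
    exfalso;
    destruct Hq as [Hq|[Hq|[Hq|Hq]]];
    try lra;
    first [ brute Hn A B qx qy
          | destruct (Rle_lt_dec (fy1 A) (fy1 B)); brute Hn A B qx qy
          | destruct (Rle_lt_dec (fy2 B) (fy2 A)); brute Hn A B qx qy
          | destruct (Rle_lt_dec (fx1 A) (fx1 B)); brute Hn A B qx qy
          | destruct (Rle_lt_dec (fx2 B) (fx2 A)); brute Hn A B qx qy ]. }
  intros [px py] Hp; unfold on_frame, left_side, right_side,
  bottom_side, top_side in Hp; unfold region; simpl in *; lra.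
Qed.

Lemma meet_sym A B : frames_meet A B -> frames_meet B A.
Proof. intros [p [H1 H2]]; exists p; auto. Qed.

Lemma interior_of (A : frame) p : region A p -> ~ on_frame A p ->
  fx1 A < fst p < fx2 A /\ fy1 A < snd p < fy2 A.
Proof.
  intros [[H1 H2] [H3 H4]] Hn; unfold on_frame, left_side, right_side,
  bottom_side, top_side in Hn.
  destruct (Req_dec (fst p) (fx1 A)); [exfalso; apply Hn; left; lra|].
  destruct (Req_dec (fst p) (fx2 A)); [exfalso; apply Hn; right; left; lra|].
  destruct (Req_dec (snd p) (fy1 A)); [exfalso; apply Hn; right; right; left; lra|].
  destruct (Req_dec (snd p) (fy2 A)); [exfalso; apply Hn; right; right; right; lra|].
  lra.
Qed.

Theorem lemma3p5 (V : Type) (E : V -> V -> Prop) (F : V -> frame)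
  (HG : finite_simple_graph E) (HF : restricted_frame_rep E F)
  (u v w : V) (Huv : inside (F u) (F v)) (Hwv : outside (F w) (F v))
  (P : list V) (HP : is_path E u w P) :
  exists z, In z P /\ (z = v \/ E z v).
Proof.
  destruct HG as [_ [Hirr _]].
  destruct HF as [HE _].
  destruct (Classical_Prop.classic (exists z, In z P /\ (z = v \/ E z v))) as [H|H];
    [exact H|exfalso].
  assert (Hno : forall z, In z P -> z <> v /\ ~ E z v).
  { intros z Hz; split; intro C; apply H; exists z; auto. }
  assert (step : forall x y, inside (F x) (F v) -> E x y -> y <> v -> ~ E y v ->
            inside (F y) (F v)).
  { intros x y Hx Exy Hyv Hyv'.
    assert (Hxy : x <> y) by (intro; subst; eapply Hirr; eauto).
    assert (Hm : frames_meet (F x) (F y)) by (apply (HE x y Hxy); auto).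
    assert (Hnm : ~ frames_meet (F y) (F v)) by (intro C; apply Hyv'; apply (HE y v Hyv); auto).
    destruct Hm as [q [Hqx Hqy]].
    destruct Hx as [_ Hx].
    assert (Hqr := Hx q Hqx).
    assert (Hqn : ~ on_frame (F v) q) by (intro C; apply Hnm; exists q; auto).
    destruct (interior_of _ _ Hqr Hqn).
    split.
    - intro C; apply Hnm; apply meet_sym; exact C.
    - eapply geom; eauto. }
  destruct HP as [Hw [_ [Hh Ht]]].
  destruct P as [|x l]; [discriminate|].
  simpl in Hh; injection Hh as ->.
  assert (All : forall l x, (forall z, In z (x :: l) -> z <> v /\ ~ E z v) ->
     is_walk E (x :: l) -> inside (F x) (F v) -> forall y, In y (x :: l) -> inside (F y) (F v)).
  { induction l0 as [|a l0 IH]; intros x0 Hn Hwk Hin y Hy.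
    - destruct Hy as [<-|[]]; auto.
    - destruct Hwk as [Ea Hwk].
      destruct Hy as [<-|Hy]; auto.
      apply (IH a); auto.
      + intros z Hz; apply Hn; right; auto.
      + destruct (Hn a) as [Ha1 Ha2]; [right; left; auto|].
        eapply step; eauto. }
  assert (Hin : In w (u :: l)).
  { apply in_rev. destruct (rev (u :: l)); [discriminate|]. simpl in Ht.
    injection Ht as ->. left; auto. }
  destruct Hwv as [_ Hwv]. apply Hwv.
  eapply All; eauto.
Qed.
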